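(* Let $(G,O)$ be an equipped group with $O$ finite. Let $g_1,\dots,g_n\in O$, $a_1,b_1,\dots,a_k,b_k\in G$, $g\in O$, let $h\in\langle g_1,\dots,g_n,a_1,b_1,\dots,a_k,b_k\rangle$, and let $s_{g^{-1}}\in S(G,O)$ satisfy $\alpha(s_{g^{-1}})=g^{-1}$. Then there exists $z\in S(G,O)$ such that, in $\mathbb S(G,O)$, $$x_{g_1}\cdots x_{g_n}\,x_g\,s_{g^{-1}}\,y_{a_1,b_1}\cdots y_{a_k,b_k}=x_{g_1}\cdots x_{g_n}\,x_{g^h}\,z\,y_{a_1,b_1}\cdots y_{a_k,b_k}.$$
   Context: Conventions: $x^y=y^{-1}xy$, $[x,y]=xyx^{-1}y^{-1}$. An equipped group $(G,O)$: $O\subset G$ invariant under conjugation, ${\bf 1}\notin O$. The strong covering semigroup $\mathbb S(G,O)$ is the semigroup generated by $x_g$ ($g\in O$) and $y_{a,b}$ ($a,b\in G$) subject to the relations, for all $g_1,g_2,g\in O$, $a,b\in G$: $x_{g_1}x_{g_2}=x_{g_2}x_{g_1^{g_2}}$; $x_gy_{a,b}=y_{a,b}x_{g^{[a,b]}}$; $x_gy_{a,b}=x_{g^{c_1}}y_{ga,b}$ with $c_1=ab^{-1}a^{-1}g^{-1}$; $y_{a,b}x_g=y_{a,g^{-1}b}x_{g^{c_2}}$ with $c_2=ba^{-1}b^{-1}g$; $x_gy_{a,b}=x_{g^{[a,b]}}y_{a^{g^{[a,b]}},b^{g^{[a,b]}}}$. (In the paper it is defined via the algebraic braid groups and shown to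 have this presentation.) $S(G,O)$ denotes its subsemigroup generated by the $x_g$, $g\in O$ (the factorization semigroup, with relations $x_{g_1}x_{g_2}=x_{g_2}x_{g_1^{g_2}}$), and $\alpha:S(G,O)\to G$ is the homomorphism $x_g\mapsto g$. *)

(* Defs.v *)
From Stdlib Require Import List.
Import ListNotations.
Set Implicit Arguments.

Section Defs.
Variable G : Type.
Variables (mul : G -> G -> G) (one : G) (inv : G -> G).

Definition is_group : Prop :=
  (forall x y z, mul x (mul y z) = mul (mul x y) z) /\
  (forall x, mul one x = x) /\ (forall x, mul x one = x) /\
  (forall x, mul (inv x) x = one) /\ (forall x, mul x (inv x) = one).

(* conventions: x^y = y^{-1} x y,  [x,y] = x y x^{-1} y^{-1} *)
Definition conj (x y : G) : G := mul (inv y) (mul x y).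
Definition comm (x y : G) : G := mul x (mul y (mul (inv x) (inv y))).

Inductive in_gen (S : G -> Prop) : G -> Prop :=
| gen_base x : S x -> in_gen S x
| gen_one : in_gen S one
| gen_mul x y : in_gen S x -> in_gen S y -> in_gen S (mul x y)
| gen_inv x : in_gen S x -> in_gen S (inv x).

Definition equipped (O : G -> Prop) : Prop :=
  (forall g h, O g -> O (conj g h)) /\ ~ O one.

Definition finite_set (O : G -> Prop) : Prop :=
  exists l : list G, forall x, O x <-> In x l.

Inductive letter : Type :=
| X : G -> letter
| Y : G -> G -> letter.

Variable O : G -> Prop.

Inductive srel : list letter -> list letter -> Prop :=
| rel1 g1 g2 : O g1 -> O g2 ->
    srel [X g1; X g2] [X g2; X (conj g1 g2)]
| rel2 g a b : O g ->
    srel [X g; Y a b] [Y a b; X (conj g (comm a b))]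
| rel3 g a b : O g ->
    srel [X g; Y a b]
         [X (conj g (mul a (mul (inv b) (mul (inv a) (inv g))))); Y (mul g a) b]
| rel4 g a b : O g ->
    srel [Y a b; X g]
         [Y a (mul (inv g) b); X (conj g (mul b (mul (inv a) (mul (inv b) g))))]
| rel5 g a b : O g ->
    srel [X g; Y a b]
         [X (conj g (comm a b));
          Y (conj a (conj g (comm a b))) (conj b (conj g (comm a b)))].

(* equality of words in SS(G,O): the congruence generated by srel *)
Inductive seq_eq : list letter -> list letter -> Prop :=
| seq_refl w : seq_eq w w
| seq_sym u v : seq_eq u v -> seq_eq v u
| seq_trans u v w : seq_eq u v -> seq_eq v w -> seq_eq u w
| seq_step u v l r : srel l r -> seq_eq (u ++ l ++ v) (u ++ r ++ v).

(* alpha : S(G,O) -> G on words in the x_g *)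
Definition alpha (s : list G) : G := fold_right mul one s.

Definition xword (s : list G) : list letter := map X s.
Definition yword (ab : list (G * G)) : list letter :=
  map (fun p => Y (fst p) (snd p)) ab.

End Defs.

(* Main.v *)
Require Import Defs.
From Stdlib Require Import List.
Import ListNotations.

Section Pf.
Variable G : Type.
Variables (mul : G -> G -> G) (one : G) (inv : G -> G).
Hypothesis HG : is_group mul one inv.
Variable O : G -> Prop.
Hypothesis HO : equipped mul one inv O.

Lemma massoc x y z : mul (mul x y) z = mul x (mul y z).
Proof. destruct HG as [H _]. now rewrite H. Qed.
Lemma lid x : mul one x = x. Proof. apply HG. Qed.
Lemma rid x : mul x one = x. Proof. apply HG. Qed.
Lemma linv x : mul (inv x) x = one. Proof. apply HG. Qed.
Lemma rinv x : mul x (inv x) = one. Proof. apply HG. Qed.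
Lemma canc1 x y : mul x (mul (inv x) y) = y.
Proof. now rewrite <- massoc, rinv, lid. Qed.
Lemma canc2 x y : mul (inv x) (mul x y) = y.
Proof. now rewrite <- massoc, linv, lid. Qed.
Lemma inv_uniq x y : mul x y = one -> y = inv x.
Proof. intro H. rewrite <- (canc2 x y), H, rid. reflexivity. Qed.
Lemma inv_inv x : inv (inv x) = x.
Proof. symmetry. apply inv_uniq. apply linv. Qed.
Lemma inv_mul x y : inv (mul x y) = mul (inv y) (inv x).
Proof. symmetry. apply inv_uniq. rewrite massoc, canc1. apply rinv. Qed.
Lemma inv_one : inv one = one.
Proof. symmetry. apply inv_uniq. apply lid. Qed.

Ltac gs := repeat progress (rewrite ?massoc, ?lid, ?rid, ?linv, ?rinv, ?canc1, ?canc2,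
  ?inv_mul, ?inv_inv, ?inv_one).
Ltac gsolve := unfold conj, comm; gs; reflexivity.

Notation cj := (conj mul inv).
Notation ceq := (seq_eq mul inv O).
Definition conjw (u : G) (l : list G) := map (fun x => cj x u) l.
Definition allO (l : list G) := forall x, In x l -> O x.
Notation al := (alpha mul one).

Lemma O_conj g h : O g -> O (cj g h). Proof. intros. now apply HO. Qed.

Lemma allO_conjw u l : allO l -> allO (conjw u l).
Proof. unfold allO, conjw. intros H x Hx. apply in_map_iff in Hx as [y [<- Hy]]. auto using O_conj. Qed.
Lemma allO_cons x l : allO (x :: l) <-> O x /\ allO l.
Proof. unfold allO; simpl; split. intuition. intros [? ?] y [<-|?]; auto. Qed.
Lemma allO_app l1 l2 : allO l1 -> allO l2 -> allO (l1 ++ l2).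
Proof. unfold allO. intros. apply in_app_or in H1 as []; auto. Qed.

Lemma conj_one x : cj x one = x. Proof. gsolve. Qed.
Lemma conj_conj x u v : cj (cj x u) v = cj x (mul u v). Proof. gsolve. Qed.
Lemma conjw_conjw u v l : conjw v (conjw u l) = conjw (mul u v) l.
Proof. unfold conjw. rewrite map_map. apply map_ext. intro. apply conj_conj. Qed.
Lemma conjw_one l : conjw one l = l.
Proof. unfold conjw. rewrite <- map_id. apply map_ext. apply conj_one. Qed.
Lemma conjw_ext u v l : u = v -> conjw u l = conjw v l. Proof. now intros ->. Qed.
Lemma alpha_app l1 l2 : al (l1 ++ l2) = mul (al l1) (al l2).
Proof. induction l1; simpl. now rewrite lid. unfold alpha in *; simpl. now rewrite IHl1, massoc. Qed.
Lemma alpha_conjw u l : al (conjw u l) = cj (al l) u.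
Proof. induction l; simpl. unfold conj; gs; reflexivity.
  unfold alpha in *; simpl. rewrite IHl. gsolve. Qed.

Lemma ctx u v l r : ceq l r -> ceq (u ++ l ++ v) (u ++ r ++ v).
Proof.
  induction 1. apply seq_refl. now apply seq_sym. eapply seq_trans; eauto.
  rewrite !app_assoc. rewrite <- !(app_assoc (u ++ u0)). rewrite <- !app_assoc.
  replace (u ++ u0 ++ l ++ v0 ++ v) with ((u ++ u0) ++ l ++ (v0 ++ v)) by (now rewrite !app_assoc).
  replace (u ++ u0 ++ r ++ v0 ++ v) with ((u ++ u0) ++ r ++ (v0 ++ v)) by (now rewrite !app_assoc).
  now apply seq_step.
Qed.
Lemma ctxl u l r : ceq l r -> ceq (u ++ l) (u ++ r).
Proof. intro H. rewrite <- (app_nil_r l), <- (app_nil_r r). now apply ctx. Qed.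
Lemma ctxr v l r : ceq l r -> ceq (l ++ v) (r ++ v).
Proof. intro H. apply (ctx nil v). exact H. Qed.
Lemma step l r : srel mul inv O l r -> ceq l r.
Proof. intro H. rewrite <- (app_nil_r l), <- (app_nil_r r). apply (seq_step nil nil H). Qed.
Lemma ceq_eq l r : l = r -> ceq l r. Proof. intros ->; apply seq_refl. Qed.

Lemma L2 t : allO t -> forall c, O c ->
  ceq (X c :: xword t) (xword t ++ [X (cj c (al t))]).
Proof.
  induction t as [|t0 t IH]; intros Ht c Hc; simpl.
  - apply ceq_eq. unfold alpha; simpl. now rewrite conj_one.
  - apply allO_cons in Ht as [H0 Ht].
    eapply seq_trans.
    + apply (ctxr (xword t) [X c; X t0] [X t0; X (cj c t0)]). apply step. now constructor.
    + simpl. apply (ctxl [X t0]). eapply seq_trans. apply IH; auto using O_conj.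
      apply ceq_eq. rewrite conj_conj. reflexivity.
Qed.

Lemma L3' t : allO t -> forall c, O c ->
  ceq (xword t ++ [X c]) (X c :: xword (conjw c t)).
Proof.
  induction t as [|t0 t IH]; intros Ht c Hc; simpl.
  - apply seq_refl.
  - apply allO_cons in Ht as [H0 Ht].
    eapply seq_trans. apply (ctxl [X t0]). apply IH; auto.
    simpl. apply (ctxr (xword (conjw c t)) [X t0; X c] [X c; X (cj t0 c)]). apply step. now constructor.
Qed.

Lemma L3 t : allO t -> forall d, O d ->
  ceq (xword t ++ [X d]) (X (cj d (inv (al t))) :: xword t).
Proof.
  intros Ht d Hd. apply seq_sym. eapply seq_trans. apply L2; auto using O_conj.
  apply ceq_eq. f_equal. f_equal. f_equal. gsolve.
Qed.

Lemma L4 w : allO w -> al w = one -> forall t, allO t ->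
  ceq (xword t ++ xword w) (xword w ++ xword t).
Proof.
  intros Hw Ha t. induction t as [|t0 t IH]; intros Ht; simpl.
  - now rewrite app_nil_r; apply seq_refl.
  - apply allO_cons in Ht as [H0 Ht].
    eapply seq_trans. apply (ctxl [X t0]). apply IH; auto.
    simpl. eapply seq_trans. apply (ctxr (xword t) (X t0 :: xword w)). apply L2; auto.
    rewrite Ha, conj_one. rewrite <- app_assoc. apply seq_refl.
Qed.

Notation cm := (comm mul inv).

Lemma R2list a b w : allO w ->
  ceq (xword w ++ [Y a b]) (Y a b :: xword (conjw (cm a b) w)).
Proof.
  induction w as [|h w IH]; intros Hw; simpl. apply seq_refl.
  apply allO_cons in Hw as [H0 Hw].
  eapply seq_trans. apply (ctxl [X h]). apply IH; auto.
  simpl. apply (ctxr (xword (conjw (cm a b) w)) [X h; Y a b] [Y a b; X (cj h (cm a b))]).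
  apply step. now constructor.
Qed.

Fixpoint kprod (l : list (G * G)) : G :=
  match l with [] => one | p :: l => mul (cm (fst p) (snd p)) (kprod l) end.

Lemma Ymove Y1 : forall w, allO w ->
  ceq (xword w ++ yword Y1) (yword Y1 ++ xword (conjw (kprod Y1) w)).
Proof.
  induction Y1 as [|[a b] Y1 IH]; intros w Hw; simpl.
  - rewrite conjw_one, app_nil_r. apply seq_refl.
  - change (Y a b :: yword Y1) with ([Y a b] ++ yword Y1).
    rewrite app_assoc. eapply seq_trans. apply ctxr. apply R2list; auto.
    simpl. apply (ctxl [Y a b]). eapply seq_trans. apply IH. now apply allO_conjw.
    rewrite conjw_conjw. apply seq_refl.
Qed.

Fixpoint Fw (r : list G) : list G :=
  match r with [] => [] | h :: r0 => h :: conjw h (Fw r0) end.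
Fixpoint Gw (v : list G) : list G :=
  match v with [] => [] | h :: t => conjw (inv h) (Gw t) ++ [h] end.

Lemma allO_Fw r : allO r -> allO (Fw r).
Proof. induction r; simpl; intros H. exact H. apply allO_cons in H as [? ?].
  apply allO_cons. split; auto. apply allO_conjw; auto. Qed.
Lemma allO_Gw r : allO r -> allO (Gw r).
Proof. induction r; simpl; intros H. exact H. apply allO_cons in H as [? ?].
  apply allO_app. apply allO_conjw; auto. intros x [<-|[]]; auto. Qed.

Lemma Fw_conj u r : Fw (conjw u r) = conjw u (Fw r).
Proof. induction r; simpl; auto. f_equal. rewrite IHr, !conjw_conjw.
  apply conjw_ext. gsolve. Qed.
Lemma conjw_app u l1 l2 : conjw u (l1 ++ l2) = conjw u l1 ++ conjw u l2.
Proof. apply map_app. Qed.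
Lemma Gw_conj u r : Gw (conjw u r) = conjw u (Gw r).
Proof. induction r; simpl; auto. rewrite IHr, conjw_app, !conjw_conjw.
  f_equal. apply conjw_ext. gsolve. Qed.

Lemma HF r : allO r -> ceq (xword (rev r)) (xword (Fw r)).
Proof.
  induction r as [|h r IH]; simpl; intros H. apply seq_refl.
  apply allO_cons in H as [H0 H]. unfold xword at 1. rewrite map_app.
  eapply seq_trans. apply ctxr. apply IH; auto.
  apply L3'; auto. apply allO_Fw; auto.
Qed.

Lemma HG' v : allO v -> ceq (xword v) (xword (Gw v)).
Proof.
  induction v as [|h t IH]; simpl; intros H. apply seq_refl.
  apply allO_cons in H as [H0 H].
  eapply seq_trans. apply (ctxl [X h]). apply IH; auto.
  unfold xword at 2. rewrite map_app. apply seq_sym. eapply seq_trans.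
  apply L3'; auto. apply allO_conjw, allO_Gw; auto.
  rewrite conjw_conjw, linv, conjw_one. apply seq_refl.
Qed.

Definition Ea a b := mul a (mul (inv b) (inv a)).

Lemma S3 b r : allO r -> forall a,
  ceq (xword (rev r) ++ [Y a b])
      (xword (conjw (mul (Ea a b) (inv (al (rev r)))) (Fw r)) ++ [Y (mul (al (rev r)) a) b]).
Proof.
  induction r as [|h r IH]; simpl; intros Hr a.
  - unfold alpha; simpl. rewrite lid. apply seq_refl.
  - apply allO_cons in Hr as [H0 Hr].
    set (v0 := rev r).
    unfold xword at 1. rewrite map_app, <- app_assoc. simpl.
    set (p := cj h (mul a (mul (inv b) (mul (inv a) (inv h))))).
    eapply seq_trans. apply (ctxl (xword v0) [X h; Y a b] [X p; Y (mul h a) b]).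
    apply step. now constructor.
    change ([X p; Y (mul h a) b]) with ([X p] ++ [Y (mul h a) b]). rewrite app_assoc.
    eapply seq_trans. apply ctxr. apply L3. unfold v0; intros x Hx; apply Hr; now apply in_rev.
    apply O_conj; auto.
    simpl. eapply seq_trans. apply (ctxl [X (cj p (inv (al v0)))]). apply IH; auto.
    simpl. rewrite alpha_app. unfold alpha at 2 4; simpl. fold (al v0).
    apply ceq_eq. f_equal. f_equal. unfold p, Ea. gsolve.
    f_equal. unfold xword. f_equal. rewrite conjw_conjw. apply conjw_ext. unfold Ea. gs. reflexivity.
    f_equal. f_equal. gs. reflexivity.
Qed.

Definition Dinv a B := mul B (mul (inv a) (inv B)).

Lemma S4 a v : allO v -> forall B,
  ceq ([Y a B] ++ xword v)
      ([Y a (mul (inv (al v)) B)] ++ xword (conjw (mul (Dinv a B) (al v)) (Gw v))).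
Proof.
  induction v as [|h t IH]; simpl; intros Hv B.
  - unfold alpha; simpl. rewrite inv_one, lid. apply seq_refl.
  - apply allO_cons in Hv as [H0 Hv].
    set (q := cj h (mul B (mul (inv a) (mul (inv B) h)))).
    eapply seq_trans. apply (ctxr (xword t) [Y a B; X h] [Y a (mul (inv h) B); X q]).
    apply step. now constructor.
    simpl. eapply seq_trans. apply (ctxl [Y a (mul (inv h) B)]). apply L2; auto.
    apply O_conj; auto.
    rewrite app_assoc.
    eapply seq_trans. apply ctxr. apply IH; auto.
    rewrite conjw_app, conjw_conjw. simpl. unfold xword; rewrite !map_app. simpl.
    apply ceq_eq. f_equal. f_equal. gs. reflexivity.
    f_equal. f_equal. f_equal. unfold Dinv. gs. reflexivity.
    f_equal. f_equal. unfold q, Dinv. gsolve.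
Qed.

Definition Good (P Yl : list (letter G)) (u : G) :=
  forall w, allO w -> al w = one ->
    ceq (P ++ xword w ++ Yl) (P ++ xword (conjw u w) ++ Yl).

Lemma alpha_conjw1 u w : al w = one -> al (conjw u w) = one.
Proof. intros H. rewrite alpha_conjw, H. gsolve. Qed.

Lemma Good_one P Yl : Good P Yl one.
Proof. intros w _ _. rewrite conjw_one. apply seq_refl. Qed.
Lemma Good_mul P Yl u v : Good P Yl u -> Good P Yl v -> Good P Yl (mul u v).
Proof. intros Hu Hv w Hw Ha. eapply seq_trans. apply Hu; auto.
  rewrite <- conjw_conjw. apply Hv. now apply allO_conjw. now apply alpha_conjw1. Qed.
Lemma Good_inv P Yl u : Good P Yl u -> Good P Yl (inv u).
Proof. intros Hu w Hw Ha. apply seq_sym.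
  eapply seq_trans. apply (Hu (conjw (inv u) w)). now apply allO_conjw. now apply alpha_conjw1.
  rewrite conjw_conjw, linv, conjw_one. apply seq_refl. Qed.
Lemma Good_eq P Yl u v : Good P Yl u -> u = v -> Good P Yl v.
Proof. now intros ? <-. Qed.

Lemma LG_E a b : Good [] [Y a b] (Ea a b).
Proof.
  intros w Hw Ha. simpl.
  rewrite <- (rev_involutive w). set (r := rev w).
  assert (Hr : allO r) by (intros x Hx; apply Hw; now apply in_rev).
  eapply seq_trans. apply S3; auto. unfold r; rewrite rev_involutive, Ha, inv_one, rid, lid.
  apply ctxr. apply seq_sym. rewrite <- Fw_conj.
  replace (conjw (Ea a b) w) with (rev (conjw (Ea a b) (rev w)))
    by (unfold conjw; rewrite map_rev, rev_involutive; reflexivity).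
  apply HF. now apply allO_conjw.
Qed.

Lemma LG_K a b : Good [] [Y a b] (mul (cm a b) (mul (Dinv a b) (inv (cm a b)))).
Proof.
  intros w Hw Ha. simpl. set (K := cm a b).
  eapply seq_trans. apply R2list; auto.
  change (Y a b :: xword (conjw K w)) with ([Y a b] ++ xword (conjw K w)).
  eapply seq_trans. apply S4. now apply allO_conjw.
  rewrite alpha_conjw1 by auto. rewrite inv_one, lid, rid.
  rewrite <- Gw_conj. eapply seq_trans. apply ctxl. apply seq_sym. apply HG'.
    apply allO_conjw, allO_conjw; auto.
  rewrite conjw_conjw. apply seq_sym. eapply seq_trans. apply R2list.
  apply allO_conjw; auto. simpl. rewrite conjw_conjw. apply ceq_eq. f_equal. f_equal. f_equal.
  unfold K; gs. reflexivity.
Qed.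

Lemma LG_a a b : Good [] [Y a b] a.
Proof.
  set (u1 := mul (cm a b) (mul (Dinv a b) (inv (cm a b)))).
  set (u2 := Ea a b).
  apply Good_eq with (mul u2 (inv (mul u2 u1))).
  apply Good_mul. apply LG_E. apply Good_inv, Good_mul. apply LG_E. apply LG_K.
  unfold u1, u2, Ea, Dinv. gsolve.
Qed.
Lemma LG_b a b : Good [] [Y a b] b.
Proof.
  set (u1 := mul (cm a b) (mul (Dinv a b) (inv (cm a b)))).
  set (u2 := Ea a b).
  apply Good_eq with (mul (inv a) (inv (mul u2 u1))).
  apply Good_mul. apply Good_inv, LG_a. apply Good_inv, Good_mul. apply LG_E. apply LG_K.
  unfold u1, u2, Ea, Dinv. gsolve.
Qed.

Lemma lift P Y1 Y2 a b u : Good [] [Y a b] u ->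
  Good P (yword (Y1 ++ (a, b) :: Y2)) (mul (kprod Y1) (mul u (inv (kprod Y1)))).
Proof.
  intros Hu w Hw Ha. unfold yword; rewrite map_app; simpl. fold (yword Y1) (yword Y2).
  set (k := kprod Y1).
  assert (M : forall v, allO v -> ceq (P ++ xword v ++ yword Y1 ++ Y a b :: yword Y2)
                     (P ++ yword Y1 ++ xword (conjw k v) ++ Y a b :: yword Y2)).
  { intros v Hv. rewrite !app_assoc. apply ctxr. rewrite <- !app_assoc. apply ctxl. apply Ymove; auto. }
  eapply seq_trans. apply M; auto.
  apply seq_sym. eapply seq_trans. apply M. apply allO_conjw; auto.
  rewrite conjw_conjw. apply seq_sym.
  rewrite !app_assoc. rewrite <- (app_assoc _ _ (Y a b :: yword Y2)).
  rewrite <- (app_assoc (P ++ yword Y1)). apply ctxl.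
  change (Y a b :: yword Y2) with ([Y a b] ++ yword Y2). rewrite !app_assoc. apply ctxr.
  eapply seq_trans. apply (Hu (conjw k w)). apply allO_conjw; auto. apply alpha_conjw1; auto.
  simpl. rewrite conjw_conjw. apply ceq_eq. f_equal. f_equal. apply conjw_ext. gs. reflexivity.
Qed.

Lemma gen_gs gs Yl c : allO gs -> In c gs -> Good (xword gs) Yl c.
Proof.
  intros Hgs Hc w Hw Ha. destruct (in_split _ _ Hc) as [l1 [l2 ->]].
  assert (Hl2 : allO l2) by (intros x Hx; apply Hgs; apply in_or_app; right; now right).
  assert (Hc' : O c) by (apply Hgs; apply in_or_app; right; now left).
  unfold xword at 1 3. rewrite map_app. simpl. fold (xword l1) (xword l2).
  rewrite <- !app_assoc. simpl. apply ctxl.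
  apply seq_trans with (X c :: xword w ++ xword l2 ++ Yl).
  { apply (ctxl [X c]). rewrite !app_assoc. apply ctxr. apply L4; auto. }
  apply seq_trans with (X c :: xword (conjw c w) ++ xword l2 ++ Yl).
  { rewrite !app_comm_cons. apply ctxr. eapply seq_trans. apply L2; auto.
    rewrite Ha, conj_one. apply L3'; auto. }
  apply (ctxl [X c]). rewrite !app_assoc. apply ctxr. apply seq_sym. apply L4; auto.
  apply allO_conjw; auto. apply alpha_conjw1; auto.
Qed.

Lemma kprod_good P Yl L0 : (forall p, In p L0 -> Good P Yl (fst p) /\ Good P Yl (snd p)) ->
  Good P Yl (kprod L0).
Proof.
  induction L0 as [|q L0 IH]; simpl; intros H. apply Good_one.
  destruct (H q (or_introl eq_refl)) as [H1 H2].
  apply Good_mul. unfold comm. repeat apply Good_mul; auto using Good_inv.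
  apply IH. intros p Hp; auto.
Qed.

Lemma gen_pairs P ab : forall L Y2, ab = L ++ Y2 -> forall p, In p L ->
  Good P (yword ab) (fst p) /\ Good P (yword ab) (snd p).
Proof.
  intros L. induction L as [|p0 L0 IH] using rev_ind; intros Y2 E p Hp. destruct Hp.
  assert (E' : ab = L0 ++ p0 :: Y2) by (rewrite E, <- app_assoc; reflexivity).
  pose proof (IH _ E') as IH0.
  assert (Hk : Good P (yword ab) (kprod L0)) by (apply kprod_good; auto).
  apply in_app_or in Hp as [Hp|[<-|[]]]. auto.
  destruct p0 as [a b]. simpl.
  pose proof (lift P L0 Y2 a b a (LG_a a b)) as Ma. pose proof (lift P L0 Y2 a b b (LG_b a b)) as Mb.
  rewrite <- E' in Ma, Mb.
  split.
  - apply Good_eq with (mul (inv (kprod L0)) (mul (mul (kprod L0) (mul a (inv (kprod L0)))) (kprod L0))).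
    apply Good_mul. apply Good_inv; auto. apply Good_mul; auto. gs. reflexivity.
  - apply Good_eq with (mul (inv (kprod L0)) (mul (mul (kprod L0) (mul b (inv (kprod L0)))) (kprod L0))).
    apply Good_mul. apply Good_inv; auto. apply Good_mul; auto. gs. reflexivity.
Qed.

Lemma gen_all P Yl (S : G -> Prop) h : (forall x, S x -> Good P Yl x) ->
  in_gen mul one inv S h -> Good P Yl h.
Proof.
  intros HS. induction 1. auto. apply Good_one. now apply Good_mul. now apply Good_inv.
Qed.
End Pf.

Theorem proposition4
  (G : Type) (mul : G -> G -> G) (one : G) (inv : G -> G)
  (HG : is_group mul one inv)
  (O : G -> Prop) (HO : equipped mul one inv O) (Ofin : finite_set O)
  (gs : list G) (Hgs : forall x, In x gs -> O x)
  (ab : list (G * G))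
  (g : G) (Hg : O g)
  (h : G)
  (Hh : in_gen mul one inv
          (fun x => In x gs \/ exists p, In p ab /\ (x = fst p \/ x = snd p)) h)
  (s : list G) (Hs : forall x, In x s -> O x) (Hsa : alpha mul one s = inv g) :
  exists z : list G, (forall x, In x z -> O x) /\
    seq_eq mul inv O
      (xword gs ++ [X g] ++ xword s ++ yword ab)
      (xword gs ++ [X (conj mul inv g h)] ++ xword z ++ yword ab).
Proof.
  assert (Hgood : Good G mul one inv O (xword gs) (yword ab) h).
  { refine (gen_all G mul one inv HG O HO _ _ _ h _ Hh). intros x [Hx|[p [Hp Hx]]].
    - apply gen_gs; auto.
    - destruct (gen_pairs G mul one inv HG O HO (xword gs) ab ab [] (eq_sym (app_nil_r ab)) p Hp) as [H1 H2].
      destruct Hx as [->| ->]; auto. }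
  exists (conjw G mul inv h s). split.
  - apply (allO_conjw G mul one inv O HO); auto.
  - apply (Hgood (g :: s)).
    + intros x [<-|Hx]; auto.
    + unfold alpha in *; simpl. rewrite Hsa. apply HG.
Qed.
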